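(* There is a constant $c>0$ such that for every $i\ge1$, the $i$-bit roof game $G_{i\text{-bit}}$ on $n=4i$ players has at most $c\,n^5$ ceiling coalitions (while it has $2^{i}=2^{n/4}$ roof coalitions).
   Context: Players are $N=\{1,\dots,n\}$, $n=4i$. A coalition $S'$ is a direct left-shift of $S$ if there is $m\in S$, $2\le m\le n$, $m-1\notin S$, with $S'=(S\setminus\{m\})\cup\{m-1\}$; a left-shift is obtained by one or more successive direct left-shifts; right-shifts are defined symmetrically (replacing $m-1$ by $m+1$ and $2\le m\le n$ by $1\le m\le n-1$). For $k\in\{0,\dots,2^i-1\}$ with $i$-bit binary representation $b_1\cdots b_i$, $S_{k,i}=\bigcup_{j=1}^iB_j$ with $B_j=\{4(j-1)+2,4(j-1)+3\}$ if $b_j=0$ and $B_j=\{4(j-1)+1,4(j-1)+4\}$ if $b_j=1$. $G_{i\text{-bit}}$ is the simple game on $N$ in which a coalition is winning iff it contains some $S_{k,i}$ or a left-shift of some $S_{k,i}$; it is a canonical linear game whose roof coalitions (minimal winning coalitions all of whose right-shifts are losing) are exactly the $2^i$ coalitions $S_{k,i}$. A ceiling coalition is a maximal losing coalition (losing $S$ with $S\cup\{m\}$ winning for all $m\notin S$) all of whose left-shifts are winning. *)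

(* Defs.v *)
From mathcomp Require Import all_boot all_order all_algebra.
Set Implicit Arguments. Unset Strict Implicit. Unset Printing Implicit Defensive.

(* Players N = {1,...,n} are represented by the ordinals 'I_n:
   the ordinal p : 'I_n stands for player p+1. *)

Section RoofGame.
Variable n : nat.

Definition direct_left_shift (S S' : {set 'I_n}) : bool :=
  [exists m : 'I_n, exists m' : 'I_n,
     [&& val m' + 1 == val m, m \in S, m' \notin S & S' == m' |: (S :\ m)]].

Definition left_shift (S S' : {set 'I_n}) : bool :=
  [exists T : {set 'I_n}, direct_left_shift S T && connect direct_left_shift T S'].

End RoofGame.

(* For k with i-bit binary
   representation b_1 ... b_i (b_1 most significant), b_j = odd (k / 2^(i-j)).
   Block j (1-based) consists of players 4(j-1)+1 .. 4(j-1)+4, i.e. ordinals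
   4(j-1) .. 4(j-1)+3.  If b_j = 0 we take players 4(j-1)+2, 4(j-1)+3
   (ordinal offsets 1,2); if b_j = 1 we take players 4(j-1)+1, 4(j-1)+4
   (ordinal offsets 0,3). *)
Definition bit_of (i k j : nat) : bool := odd (k %/ 2 ^ (i - j)).

Definition S_roof (i k : nat) : {set 'I_(4 * i)} :=
  [set p : 'I_(4 * i) |
     let j := (val p %/ 4).+1 in
     let r := val p %% 4 in
     if bit_of i k j then (r == 0) || (r == 3) else (r == 1) || (r == 2)].

Definition winning_ibit (i : nat) (S : {set 'I_(4 * i)}) : bool :=
  [exists k : 'I_(2 ^ i), exists T : {set 'I_(4 * i)},
     ((T == S_roof i k) || left_shift (S_roof i k) T) && (T \subset S)].

Definition losing_ibit (i : nat) (S : {set 'I_(4 * i)}) : bool :=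
  ~~ winning_ibit S.

Definition maximal_losing_ibit (i : nat) (S : {set 'I_(4 * i)}) : bool :=
  losing_ibit S && [forall m : 'I_(4 * i), (m \notin S) ==> winning_ibit (m |: S)].

Definition ceiling_ibit (i : nat) (S : {set 'I_(4 * i)}) : bool :=
  maximal_losing_ibit S && [forall S' : {set 'I_(4 * i)}, left_shift S S' ==> winning_ibit S'].

(* Main.v *)
Require Import Defs.
From mathcomp Require Import all_boot all_order all_algebra.
From mathcomp Require Import zify.
Import Order.TTheory GRing.Theory Num.Theory.
Set Implicit Arguments. Unset Strict Implicit. Unset Printing Implicit Defensive.

Section Gen.
Variable n : nat.
Implicit Types S T R : {set 'I_n}.

Definition memS S (u : nat) : bool := [exists x : 'I_n, (x \in S) && (val x == u)].
Definition pc S (t : nat) : nat := \sum_(u < t) memS S u.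

Lemma memS_ord S (x : 'I_n) : memS S x = (x \in S).
Proof.
apply/existsP/idP => [[y /andP[Hy /eqP/val_inj <-]] //| Hx].
by exists x; rewrite Hx eqxx.
Qed.

Lemma memS_ge S u : n <= u -> memS S u = false.
Proof.
move=> Hu; apply/existsP => -[y /andP[_ /eqP Hy]]; have := ltn_ord y; rewrite Hy; lia.
Qed.

Lemma memS_sub S T u : S \subset T -> memS S u <= memS T u.
Proof.
move=> /subsetP H; case: (boolP (memS S u)) => // /existsP[y /andP[Hy Hv]].
suff -> : memS T u by []. by apply/existsP; exists y; rewrite H.
Qed.

Lemma pcS S t : pc S t.+1 = pc S t + memS S t.
Proof. by rewrite /pc big_ord_recr. Qed.

Lemma pc0 S : pc S 0 = 0.
Proof. by rewrite /pc big_ord0. Qed.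

Lemma pc_mono S t t' : t <= t' -> pc S t <= pc S t'.
Proof.
move=> H; rewrite -(subnKC H); elim: (t' - t) => [|d IH]; first by rewrite addn0.
by rewrite addnS pcS; lia.
Qed.

Lemma pc_const S t : n <= t -> pc S t = pc S n.
Proof.
elim: t => [|t IH] Ht; first by have -> : n = 0 by lia.
case: (ltnP n t.+1) => H.
  by rewrite pcS memS_ge ?addn0; [apply: IH|]; lia.
by have -> : n = t.+1 by lia.
Qed.

Lemma pc_sub S T t : S \subset T -> pc S t <= pc T t.
Proof. by move=> H; apply: leq_sum => u _; apply: memS_sub. Qed.

Lemma pc_le_n S t : pc S t <= pc S n.
Proof.
case: (leqP t n) => H; first exact: pc_mono.
by rewrite pc_const //; lia.
Qed.

Section Shift.
Variables (S : {set 'I_n}) (m m' : 'I_n).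
Hypotheses (Hmm : val m' + 1 = val m) (Hm : m \in S) (Hm' : m' \notin S).

Lemma memS_shift u : memS (m' |: (S :\ m)) u = (u == val m') || (memS S u && (u != val m)).
Proof.
case: (ltnP u n) => Hu.
  pose x := Ordinal Hu; rewrite -[u]/(val x) !memS_ord in_setU1 in_setD1.
  by rewrite !val_eqE andbC.
rewrite !memS_ge //; have := ltn_ord m'; rewrite /=; lia.
Qed.

Lemma pc_shift t : pc (m' |: (S :\ m)) t = pc S t + (t == val m).
Proof.
elim: t => [|t IH]; first by rewrite !pc0; lia.
rewrite !pcS IH memS_shift.
case: (eqVneq t (val m')) => [Ht|Ht].
  have : memS S t = false by rewrite Ht memS_ord (negbTE Hm').
  move=> ->; lia.
case: (eqVneq t (val m)) => [Ht2|Ht2].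
  have : memS S t = true by rewrite Ht2 memS_ord.
  move=> ->; lia.
lia.
Qed.
End Shift.

Lemma dls_pc {S S'} : direct_left_shift S S' -> forall t, pc S t <= pc S' t.
Proof.
move=> /existsP[m /existsP[m' /and4P[/eqP H1 H2 H3 /eqP ->]]] t.
by rewrite pc_shift //; lia.
Qed.

Lemma connect_pc {S S'} : connect (@direct_left_shift n) S S' -> forall t, pc S t <= pc S' t.
Proof.
move/connectP=> [p Hp ->]; elim: p S Hp => [|a p IH] S //= /andP[H1 H2] t.
apply: leq_trans (IH _ H2 t); exact: dls_pc H1 t.
Qed.

Lemma ls_pc {S S'} : left_shift S S' -> forall t, pc S t <= pc S' t.
Proof.
move=> /existsP[T /andP[H1 H2]] t; apply: leq_trans (connect_pc H2 t); exact: dls_pc H1 t.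
Qed.

Lemma dls_mk S (y : nat) : 0 < y -> y < n -> memS S y -> ~~ memS S y.-1 ->
  exists S', direct_left_shift S S' /\ forall t, pc S' t = pc S t + (t == y).
Proof.
move=> H0 Hn H1 H2.
have Hn' : y.-1 < n by lia.
pose m := Ordinal Hn; pose m' := Ordinal Hn'.
have E : val m' + 1 = val m by rewrite /= ; lia.
have Hm : m \in S by rewrite -memS_ord.
have Hm' : m' \notin S by rewrite -memS_ord.
exists (m' |: (S :\ m)); split; last by move=> t; rewrite pc_shift.
apply/existsP; exists m; apply/existsP; exists m'; rewrite Hm Hm' eqxx /= andbT.
by apply/eqP; rewrite /=; lia.
Qed.
End Gen.


Section Gen2.
Variable n : nat.
Implicit Types S T R : {set 'I_n}.

Lemma pc_eq_set R T : (forall t, pc R t = pc T t) -> R = T.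
Proof.
move=> H; apply/setP => x; rewrite -!memS_ord.
have := H x.+1; rewrite !pcS H => /addnI.
by case: (memS R x); case: (memS T x).
Qed.

Lemma go_up R T : (forall t, pc R t <= pc T t) -> pc R n = pc T n ->
  forall d u, n - u = d -> pc R u < pc T u ->
  exists u', [/\ u' < n, memS R u' & pc R u' < pc T u'].
Proof.
move=> Hle Hn; elim=> [|d IH] u Hd Hu.
  have Hnu : n <= u by lia.
  by move: Hu; rewrite (pc_const R Hnu) (pc_const T Hnu) Hn ltnn.
case HR : (memS R u); first by exists u; split=> //; lia.
apply: (IH u.+1); first lia.
rewrite pcS HR addn0; apply: (leq_trans Hu); exact: pc_mono.
Qed.

Lemma go_down R T : forall u, memS R u -> pc R u < pc T u ->
  exists v, [/\ 0 < v, v <= u, memS R v, ~~ memS R v.-1 & pc R v < pc T v].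
Proof.
elim=> [|u IH] HR Hu; first by move: Hu; rewrite !pc0.
case HRu : (memS R u).
  have : pc R u < pc T u.
    move: Hu; rewrite !pcS HRu; case: (memS T u) => /=; lia.
  move=> /(IH HRu) [v [H1 H2 H3 H4 H5]]; exists v; split=> //; lia.
by exists u.+1; split=> //=; rewrite HRu.
Qed.

Lemma find_v R T : (forall t, pc R t <= pc T t) -> pc R n = pc T n -> R != T ->
  exists v, [/\ 0 < v, v < n, memS R v, ~~ memS R v.-1 & pc R v < pc T v].
Proof.
move=> Hle Hn HRT.
have [u Hu] : exists u, pc R u < pc T u.
  case: (boolP [exists u : 'I_n.+1, pc R u < pc T u]) => [/existsP[u Hu]|/existsPn Hno].
    by exists u.
  case/negP: HRT; apply/eqP/pc_eq_set => t.
  have E : forall u, u <= n -> pc R u = pc T u.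
    move=> u Hu; have := Hno (Ordinal (n:=n.+1) (m:=u) Hu); rewrite /= -leqNgt => H.
    by apply/eqP; rewrite eqn_leq Hle H.
  case: (leqP t n) => Ht; first exact: E.
  by rewrite !(pc_const _ (ltnW Ht)) E.
have [u' [H1 H2 H3]] := go_up Hle Hn (erefl _) Hu.
have [v [H4 H5 H6 H7 H8]] := go_down H2 H3.
exists v; split=> //; lia.
Qed.

Lemma sum_ind (v : nat) : v <= n -> \sum_(t < n.+1) (nat_of_ord t == v) = 1.
Proof.
move=> Hv; rewrite (bigD1 (Ordinal (n:=n.+1) (m:=v) Hv)) //= eqxx big1 // => j Hj.
by apply/eqP; rewrite eqb0; apply: contra Hj => /eqP E; apply/eqP/val_inj.
Qed.

Lemma chain T : forall N R, (\sum_(t < n.+1) pc T t) - (\sum_(t < n.+1) pc R t) <= N ->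
  (forall t, pc R t <= pc T t) -> pc R n = pc T n -> R = T \/ left_shift R T.
Proof.
elim=> [|N IH] R HN Hle Hn; (case: (eqVneq R T) => [->|HRT]; first by left);
  have [v [H1 H2 H3 H4 H5]] := find_v Hle Hn HRT;
  have [S' [HS' Hpc]] := dls_mk H1 H2 H3 H4;
  have Hle' : forall t, pc S' t <= pc T t by
    (move=> t; rewrite Hpc; case: (eqVneq t v) => [->|Ht]; [lia| rewrite addn0 Hle]).
- have : \sum_(t < n.+1) pc S' t <= \sum_(t < n.+1) pc T t by apply: leq_sum => t _.
  have : \sum_(t < n.+1) pc S' t = \sum_(t < n.+1) pc R t + 1.
    rewrite (eq_bigr (fun t : 'I_n.+1 => pc R t + (nat_of_ord t == v))); last by move=> t _; rewrite Hpc.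
    by rewrite big_split /= sum_ind // ltnW.
  lia.
have Hn' : pc S' n = pc T n by rewrite Hpc -Hn; lia.
have : \sum_(t < n.+1) pc S' t <= \sum_(t < n.+1) pc T t by apply: leq_sum => t _.
have : \sum_(t < n.+1) pc S' t = \sum_(t < n.+1) pc R t + 1.
  rewrite (eq_bigr (fun t : 'I_n.+1 => pc R t + (nat_of_ord t == v))); last by move=> t _; rewrite Hpc.
  by rewrite big_split /= sum_ind // ltnW.
move=> E1 E2.
have HN' : \sum_(t < n.+1) pc T t - \sum_(t < n.+1) pc S' t <= N by lia.
right; apply/existsP; exists S'; rewrite HS' /=.
case: (IH S' HN' Hle' Hn') => [->|]; first exact: connect0.
move=> /existsP[T0 /andP[H6 H7]]; apply: connect_trans H7; exact: connect1.
Qed.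

Lemma winB R S : (forall t, pc R t <= pc S t) ->
  exists T, ((T == R) || left_shift R T) && (T \subset S).
Proof.
move=> Hle.
pose T := [set x in S | pc S x < pc R n].
have mT : forall u, memS T u = memS S u && (pc S u < pc R n).
  move=> u; case: (ltnP u n) => Hu.
    by pose x := Ordinal Hu; rewrite -[u]/(nat_of_ord x) !memS_ord inE.
  by rewrite !memS_ge.
have pT : forall t, pc T t = minn (pc S t) (pc R n).
  elim=> [|t IH]; first by rewrite !pc0 min0n.
  rewrite !pcS mT IH; case: (memS S t) => /=; lia.
have HRn : pc R n <= pc S n by [].
have Hle' : forall t, pc R t <= pc T t.
  move=> t; rewrite pT; have := pc_le_n R t; have := Hle t; lia.
have Hn : pc R n = pc T n by rewrite pT; lia.
exists T; apply/andP; split.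
  by case: (chain (leqnn _) Hle' Hn) => [->|->]; rewrite ?eqxx ?orbT.
by apply/subsetP => x; rewrite inE => /andP[].
Qed.
End Gen2.


Lemma bits_exist i (b : nat -> bool) :
  exists k, k < 2 ^ i /\ forall j, 1 <= j <= i -> bit_of i k j = b j.
Proof.
elim: i => [|i [k' [Hk' Hb]]]; first by exists 0; split => // j; lia.
exists (k'.*2 + b i.+1); split.
  rewrite expnS; case: (b i.+1) => /=; lia.
move=> j Hj; rewrite /bit_of.
case: (eqVneq j i.+1) => [->|Hji].
  by rewrite subnn expn0 divn1 oddD odd_double; case: (b i.+1).
have -> : i.+1 - j = (i - j).+1 by lia.
rewrite expnS divnMA.
have -> : (k'.*2 + b i.+1) %/ 2 = k' by case: (b i.+1) => /=; lia.
by rewrite -Hb //; lia.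
Qed.

Definition cf (b : bool) (r : nat) : nat :=
  match r with 0 => 0 | 1 => b | 2 => 1 | 3 => 2 - b | _ => 2 end.

Section Roof.
Variables (i k : nat).
Local Notation R := (S_roof i k).

Lemma memS_roof a r : a < i -> r < 4 ->
  memS R (4 * a + r) = if bit_of i k a.+1 then (r == 0) || (r == 3) else (r == 1) || (r == 2).
Proof.
move=> Ha Hr.
have Hu : 4 * a + r < 4 * i by lia.
pose x := Ordinal Hu; rewrite -[4 * a + r]/(nat_of_ord x) memS_ord inE /=.
have -> : (4 * a + r) %/ 4 = a by lia.
have -> : (4 * a + r) %% 4 = r by lia.
by [].
Qed.

Lemma pc_roof_block a : a < i -> pc R (4 * a).+4 = pc R (4 * a) + 2.
Proof.
move=> Ha; rewrite !pcS.
have := (@memS_roof a 0 Ha erefl); have := (@memS_roof a 1 Ha erefl); have := (@memS_roof a 2 Ha erefl); have := (@memS_roof a 3 Ha erefl).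
rewrite !addn0 !addn1 !addn2 !addn3 => -> -> -> -> //.
by case: (bit_of i k a.+1) => /=; lia.
Qed.

Lemma pc_roof0 a : a <= i -> pc R (4 * a) = 2 * a.
Proof.
elim: a => [|a IH] Ha; first by rewrite pc0.
have -> : 4 * a.+1 = (4 * a).+4 by lia.
rewrite pc_roof_block ?IH; lia.
Qed.

Lemma pc_roof a r : a < i -> r <= 4 -> pc R (4 * a + r) = 2 * a + cf (bit_of i k a.+1) r.
Proof.
move=> Ha Hr.
have E0 := pc_roof0 (ltnW Ha).
have M0 := (@memS_roof a 0 Ha erefl); have M1 := (@memS_roof a 1 Ha erefl); have M2 := (@memS_roof a 2 Ha erefl).
have M3 := (@memS_roof a 3 Ha erefl).
rewrite !addn0 in M0 E0; rewrite !addn1 in M1; rewrite !addn2 in M2; rewrite !addn3 in M3.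
case: r Hr => [|[|[|[|[|r]]]]] Hr //=; rewrite ?addn0 ?E0 ?addn1 ?addn2 ?addn3 ?addn4 ?pcS ?E0 ?M0 ?M1 ?M2 ?M3;
  case: (bit_of i k a.+1) => /=; lia.
Qed.
End Roof.


Lemma win_pc i (S : {set 'I_(4 * i)}) : winning_ibit S ->
  exists k, k < 2 ^ i /\ forall t, pc (S_roof i k) t <= pc S t.
Proof.
move=> /existsP[k /existsP[T /andP[HT Hsub]]]; exists k; split; first exact: ltn_ord.
move=> t; apply: leq_trans (pc_sub t Hsub).
case/orP: HT => [/eqP ->|HT] //; exact: ls_pc HT t.
Qed.

Lemma pc_win i (S : {set 'I_(4 * i)}) k : k < 2 ^ i ->
  (forall t, pc (S_roof i k) t <= pc S t) -> winning_ibit S.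
Proof.
move=> Hk Hle; have [T HT] := winB Hle.
by apply/existsP; exists (Ordinal Hk); apply/existsP; exists T.
Qed.

Lemma key i (S : {set 'I_(4 * i)}) (y1 y2 y3 k1 k2 k3 : nat) :
  y1 != y2 -> y1 != y3 -> y2 != y3 ->
  (forall t, pc (S_roof i k1) t <= pc S t + (t == y1)) ->
  (forall t, pc (S_roof i k2) t <= pc S t + (t == y2)) ->
  (forall t, pc (S_roof i k3) t <= pc S t + (t == y3)) ->
  exists k, k < 2 ^ i /\ forall t, pc (S_roof i k) t <= pc S t.
Proof.
move=> D12 D13 D23 H1 H2 H3.
pose good y a := (y != 4 * a + 1) && (y != 4 * a + 3).
pose b j := if good y1 j.-1 then bit_of i k1 j else if good y2 j.-1 then bit_of i k2 j
            else bit_of i k3 j.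
have [k [Hk Hb]] := bits_exist i b.
exists k; split => //.
have Hblk : forall a r, a < i -> 0 < r <= 4 -> pc (S_roof i k) (4 * a + r) <= pc S (4 * a + r).
  move=> a r Ha Hr.
  have Hbk : bit_of i k a.+1 = b a.+1 by apply: Hb; lia.
  have hq : forall kq yq, (forall t, pc (S_roof i kq) t <= pc S t + (t == yq)) ->
      yq != 4 * a + r -> (r == 2) || (r == 4) || (bit_of i kq a.+1 == bit_of i k a.+1) ->
      pc (S_roof i k) (4 * a + r) <= pc S (4 * a + r).
    move=> kq yq Hq Hy Hc.
    have := Hq (4 * a + r).
    rewrite (_ : (4 * a + r == yq) = false); last by rewrite eq_sym; exact/negbTE.
    rewrite addn0 !pc_roof //; try lia.
    by case/orP: Hc => [/orP[/eqP Er | /eqP Er] | /eqP ->] //; rewrite Er.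
  case: (boolP ((r == 2) || (r == 4))) => Hev.
    case: (eqVneq y1 (4 * a + r)) => E1.
      by apply: (hq k2 y2 H2); [rewrite -E1 eq_sym | rewrite Hev].
    by apply: (hq k1 y1 H1); [ | rewrite Hev].
  rewrite /b /= in Hbk.
  case G1: (good y1 a).
    apply: (hq k1 y1 H1); last by rewrite Hbk G1 eqxx orbT.
    by move: G1 Hev Hr; rewrite /good; lia.
  case G2: (good y2 a).
    apply: (hq k2 y2 H2); last by rewrite Hbk G1 G2 eqxx orbT.
    by move: G2 Hev Hr; rewrite /good; lia.
  apply: (hq k3 y3 H3); last by rewrite Hbk G1 G2 eqxx orbT.
  by move: G1 G2 Hev Hr D12 D13 D23; rewrite /good; lia.
move=> t; case: (posnP t) => [->|Ht0]; first by rewrite !pc0.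
case: (ltnP t (4 * i)) => Ht.
  have -> : t = 4 * ((t.-1) %/ 4) + ((t.-1) %% 4).+1 by lia.
  apply: Hblk; lia.
rewrite !(pc_const _ Ht).
case: (posnP i) => Hi.
  have H0 : 4 * i <= 0 by lia.
  by rewrite -!(pc_const _ H0) !pc0.
have E : 4 * i.-1 + 4 = 4 * i by lia.
have := Hblk i.-1 4; rewrite E; apply; lia.
Qed.


Fixpoint nxt (P : pred nat) (a f : nat) : nat :=
  if f is f'.+1 then (if P a then a else nxt P a.+1 f') else a.

Lemma nxt_spec (P : pred nat) f a :
  [/\ a <= nxt P a f, nxt P a f <= a + f, (nxt P a f < a + f -> P (nxt P a f))
    & forall x, a <= x -> x < nxt P a f -> ~~ P x].
Proof.
elim: f a => [|f IH] a /=.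
  by split=> //; [rewrite addn0 | rewrite addn0 ltnn | move=> x H1 H2; lia].
case HP: (P a).
  by split=> //; [lia | move=> x H1 H2; lia].
have [H1 H2 H3 H4] := IH a.+1.
split; [lia | lia | move=> H; apply: H3; lia |].
move=> x Hx1 Hx2; case: (eqVneq x a) => [->|Hxa]; first by rewrite HP.
apply: H4 => //; lia.
Qed.

Section Rep.
Variable n : nat.
Variable S : {set 'I_n}.

Definition desc (y : nat) : bool := [&& 0 < y, memS S y & ~~ memS S y.-1].

Definition N (P : pred nat) a := nxt P a (n - a).

Lemma N_spec (P : pred nat) a :
  [/\ a <= N P a, (N P a < n -> P (N P a)) & forall x, a <= x -> x < N P a -> ~~ P x].
Proof.
have [H1 H2 H3 H4] := nxt_spec P (n - a) a.
rewrite /N; split=> //.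
by move=> H; apply: H3; lia.
Qed.

Lemma desc_exist a b : a < b -> ~~ memS S a -> memS S b -> exists y, [/\ a < y, y <= b & desc y].
Proof.
elim: b => [|b IH] Hab Ha Hb; first by [].
case Hb' : (memS S b).
  case: (eqVneq a b) => [E|Hne]; first by move: Ha; rewrite E Hb'.
  have [y [H1 H2 H3]] := IH (ltac:(lia)) Ha Hb'; exists y; split=> //; lia.
by exists b.+1; split=> //; rewrite /desc /= Hb Hb'.
Qed.

Hypothesis H3 : forall y1 y2 y3, desc y1 -> desc y2 -> desc y3 -> y1 < y2 -> y2 < y3 -> False.

Lemma rep : exists c1 c2 c3 c4 c5 : nat, forall x, x < n ->
  memS S x = [|| x < c1, (c2 <= x) && (x < c3) | (c4 <= x) && (x < c5)].
Proof.
pose notS := fun x => ~~ memS S x.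
pose c1 := N notS 0. pose d1 := N desc 0. pose c3 := N notS d1.
pose d2 := N desc d1.+1. pose c5 := N notS d2.
have [A1 B1 C1] := N_spec notS 0.
have [A2 B2 C2] := N_spec desc 0.
have [A3 B3 C3] := N_spec notS d1.
have [A4 B4 C4] := N_spec desc d1.+1.
have [A5 B5 C5] := N_spec notS d2.
exists c1, d1, c3, d2, c5 => x Hx.
apply/idP/idP; last first.
  case/or3P => [H | /andP[H H'] | /andP[H H']].
  - by have := C1 x (leq0n _) H; rewrite /notS negbK.
  - by have := C3 x H H'; rewrite /notS negbK.
  - by have := C5 x H H'; rewrite /notS negbK.
move=> Hm.
case: (ltnP x c1) => Hc1; first by [].
have L1 : c1 < x.
  case: (eqVneq c1 x) => E; last lia.
  by move: (B1 (ltac:(lia))); rewrite /notS -/c1 -/c3 -/c5 E Hm.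
have [y [Hy1 Hy2 Hy3]] := desc_exist L1 (B1 (ltac:(lia))) Hm.
have Hd1y : d1 <= y.
  case: (leqP d1 y) => // H; by have := C2 y (leq0n _) H; rewrite Hy3.
case: (ltnP x c3) => Hc3; first by rewrite (_ : d1 <= x) ?orbT //; lia.
have L3 : c3 < x.
  case: (eqVneq c3 x) => E; last lia.
  by move: (B3 (ltac:(lia))); rewrite /notS -/c1 -/c3 -/c5 E Hm.
have [y' [Hy1' Hy2' Hy3']] := desc_exist L3 (B3 (ltac:(lia))) Hm.
have Hd2y : d2 <= y'.
  case: (leqP d2 y') => // H; by have := C4 y' (ltac:(lia)) H; rewrite Hy3'.
case: (ltnP x c5) => Hc5; first by rewrite (_ : d2 <= x) ?orbT //; lia.
have L5 : c5 < x.
  case: (eqVneq c5 x) => E; last lia.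
  by move: (B5 (ltac:(lia))); rewrite /notS -/c1 -/c3 -/c5 E Hm.
have [y'' [Hy1'' Hy2'' Hy3'']] := desc_exist L5 (B5 (ltac:(lia))) Hm.
exfalso; apply: (H3 (B2 (ltac:(lia))) (B4 (ltac:(lia))) Hy3''); lia.
Qed.
End Rep.


Section Count.
Variable n : nat.
Local Notation D := ('I_n.+1 * 'I_n.+1 * 'I_n.+1 * 'I_n.+1 * 'I_n.+1)%type.

Definition gset (c : D) : {set 'I_n} :=
  [set x : 'I_n | [|| x < c.1.1.1.1, (c.1.1.1.2 <= x) && (x < c.1.1.2)
                    | (c.1.2 <= x) && (x < c.2)]].

Lemma count_bound (P : pred {set 'I_n}) :
  (forall S, P S -> forall y1 y2 y3, desc S y1 -> desc S y2 -> desc S y3 ->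
     y1 < y2 -> y2 < y3 -> False) ->
  #|[set S | P S]| <= n.+1 ^ 5.
Proof.
move=> HP.
have sub : [set S | P S] \subset gset @: [set: D].
  apply/subsetP => S; rewrite inE => /HP /rep [c1 [c2 [c3 [c4 [c5 Hc]]]]].
  apply/imsetP.
  exists (inord (minn c1 n), inord (minn c2 n), inord (minn c3 n), inord (minn c4 n),
          inord (minn c5 n)); first by [].
  apply/setP => x; have := ltn_ord x; rewrite -memS_ord Hc // inE /= !inordK; lia.
apply: leq_trans (subset_leq_card sub) _.
apply: leq_trans (leq_imset_card _ _) _.
by rewrite cardsT !card_prod !card_ord !expnS expn0 muln1 !mulnA.
Qed.
End Count.

Lemma ceil_no3 i (S : {set 'I_(4 * i)}) : ceiling_ibit S ->
  forall y1 y2 y3, desc S y1 -> desc S y2 -> desc S y3 -> y1 < y2 -> y2 < y3 -> False.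
Proof.
move=> /andP[/andP[Hlos _] /forallP Hsh] y1 y2 y3 D1 D2 D3 L12 L23.
have step : forall y, desc S y -> exists kq, forall t, pc (S_roof i kq) t <= pc S t + (t == y).
  move=> y /and3P[Hy0 Hy1 Hy2].
  have Hyn : y < 4 * i by case: (ltnP y (4 * i)) => // H; rewrite memS_ge in Hy1.
  have [S' [HS' Hpc]] := dls_mk Hy0 Hyn Hy1 Hy2.
  have Hls : left_shift S S' by apply/existsP; exists S'; rewrite HS' connect0.
  have := Hsh S'; rewrite Hls /= => /win_pc [kq [_ Hkq]].
  by exists kq => t; rewrite -Hpc.
have [k1 H1] := step _ D1; have [k2 H2] := step _ D2; have [k3 H3] := step _ D3.
have [k [Hk Hle]] := key (ltac:(lia) : y1 != y2) (ltac:(lia) : y1 != y3) (ltac:(lia) : y2 != y3) H1 H2 H3.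
by move/negP: Hlos; apply; apply: pc_win Hk Hle.
Qed.

Local Open Scope ring_scope.

Theorem corollary3 :
  exists c : rat, 0 < c /\
    forall i : nat, (1 <= i)%N ->
      (#|[set S : {set 'I_(4 * i)} | ceiling_ibit S]|%:R : rat)
        <= c * ((4 * i)%N%:R) ^+ 5.
Proof.
exists 32%:R; split; first by [].
move=> i Hi.
have H := count_bound (@ceil_no3 i).
have H' : ((4 * i).+1 ^ 5 <= 32 * (4 * i) ^ 5)%N.
  have -> : (32 * (4 * i) ^ 5 = (2 * (4 * i)) ^ 5)%N.
    by rewrite [RHS]expnMn.
  by rewrite leq_exp2r //; lia.
rewrite -natrX -natrM ler_nat.
exact: leq_trans H H'.
Qed.
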